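(* Let $p,q,r$ be integers with $1<p<q<r$, $p$ odd and $pq+pr-qr=1$. Then $$\max_{1\le m\le n_p}F_{p,q}(1,m)=F_{p,q}\big(1,\,t_{p,q}+\min\{\alpha_{p,q},1\}\big)=(t_{p,q}+1)(n_p+\alpha_{p,q}).$$
   Context: $n_p=(p-1)/2$; $t_{p,q}$, $\alpha_{p,q}$ are quotient and remainder of $n_p$ divided by $q-p$ ($n_p=t_{p,q}(q-p)+\alpha_{p,q}$, $0\le\alpha_{p,q}<q-p$). $F_{p,q}(x,y)=\frac{1}{4}\left(-(q+r)x^2+4qxy-4(q-p)y^2-4y+q+r\right)$; $m$ ranges over integers. *)

(* Defs.v *)
From mathcomp Require Import all_boot all_order all_algebra.
Set Implicit Arguments. Unset Strict Implicit. Unset Printing Implicit Defensive.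
Import Order.TTheory GRing.Theory Num.Theory.
Local Open Scope ring_scope.

Definition n_ (p : int) : int := ((p - 1) %/ 2)%Z.
Definition t_ (p q : int) : int := ((n_ p) %/ (q - p))%Z.
Definition alpha_ (p q : int) : int := ((n_ p) %% (q - p))%Z.

Definition F (p q r : int) (x y : int) : rat :=
  (1 / 4) * ( - (q + r)%:~R * (x%:~R) ^+ 2 + 4 * q%:~R * x%:~R * y%:~R
              - 4 * (q - p)%:~R * (y%:~R) ^+ 2 - 4 * y%:~R + (q + r)%:~R).

Definition maxF1 (p q r : int) : rat :=
  \big[Num.max/F p q r 1 1]_(1 <= i < (`|n_ p|%N).+1) F p q r 1 (i%:Z).

(* Main.v *)
Require Import Defs.
From mathcomp Require Import all_boot all_order all_algebra zify ring lra.
Import Order.TTheory GRing.Theory Num.Theory.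
Local Open Scope ring_scope.
Lemma a (p : int) : 1 < p -> odd `|p|%N -> p = 2 * n_ p + 1.
Proof. rewrite /n_ => h1 h2. have := odd_double_half `|p|%N. rewrite h2. lia. Qed.
Lemma b (p q : int) : p < q -> n_ p = t_ p q * (q - p) + alpha_ p q /\ 0 <= alpha_ p q < q - p.
Proof. rewrite /t_ /alpha_ => h. lia. Qed.
Lemma Fe p q r y : F p q r 1 y = (y*(q-1) - (q-p)*y*y)%:~R.
Proof. rewrite /F. rewrite !(intrD, intrM, intrN, intrB). by field. Qed.

Lemma quad (n t al d m : int) : n = t * d + al -> 0 <= al < d ->
  m * (2*n+1+d-1) - d * m * m <= (t+1)*(n+al).
Proof.
move=> hn hal.
have e : (t+1)*(n+al) - (m * (2*n+1+d-1) - d * m * m) = (m-t-1)*(d*(m-t) - 2*al).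
  rewrite hn; ring.
suff : 0 <= (m-t-1)*(d*(m-t) - 2*al) by lia.
have [h|h] := lerP 0 (m-t-1).
  have [h0|h0] := eqVneq (m-t-1) 0; first by rewrite h0 mul0r.
  apply: mulr_ge0 => //. nia.
apply: mulr_le0; [lia|nia].
Qed.

Lemma big_le (s : seq nat) (f : nat -> rat) x0 M :
  x0 <= M -> (forall i, i \in s -> f i <= M) -> \big[Num.max/x0]_(i <- s) f i <= M.
Proof.
elim: s => [|a s IH] h1 h2; first by rewrite big_nil.
rewrite big_cons ge_max h2 ?mem_head //= IH // => i hi; apply: h2; rewrite in_cons hi orbT.
by [].

Qed.

Lemma big_ge (s : seq nat) (f : nat -> rat) x0 j :
  j \in s -> f j <= \big[Num.max/x0]_(i <- s) f i.
Proof.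
elim: s => [|a s IH] //; rewrite in_cons big_cons le_max.
case/orP => [/eqP ->|h]; first by rewrite lexx.
by rewrite IH ?orbT.
Qed.

Theorem proposition3p5 (p q r : int) :
  1 < p -> p < q -> q < r -> odd `|p|%N -> p * q + p * r - q * r = 1 ->
  maxF1 p q r = F p q r 1 (t_ p q + Num.min (alpha_ p q) 1) /\
  F p q r 1 (t_ p q + Num.min (alpha_ p q) 1)
    = ((t_ p q + 1) * (n_ p + alpha_ p q))%:~R.
Proof.
move=> h1 h2 h3 hodd _.
have hp := @a p h1 hodd.
have [hn hal] := @b p q h2.
have ht : 0 <= t_ p q by nia.
set n := n_ p in hp hn *; set t := t_ p q in hn hal *; set al := alpha_ p q in hn hal *.
have hmin : Num.min al 1 = if al == 0 then 0 else 1.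
  case: eqP => [->|h] //. rewrite /Num.min. case: ifP => //. lia.
have hval : F p q r 1 (t + Num.min al 1) = ((t + 1) * (n + al))%:~R.
  rewrite Fe; congr (_%:~R); rewrite hmin.
  move: hn; set d := q - p => hn'.
  have hq : q = p + d by rewrite /d; ring.
  rewrite hq hp hn'.
  case: eqP => [h0|h0]; [rewrite h0; ring | ring].
split => //.
have hub : forall y, F p q r 1 y <= ((t + 1) * (n + al))%:~R.
  move=> y; rewrite Fe ler_int. have := @quad n t al (q-p) y hn hal.
  have -> : 2 * n + 1 + (q - p) - 1 = q - 1 by lia.
  lia.
rewrite hval; apply/le_anti/andP; split.
  rewrite /maxF1; apply: big_le => // i _.
rewrite -hval /maxF1.
have hm : (0 <= t + Num.min al 1) by rewrite hmin; case: eqP; lia.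
have hd : 1 <= q - p by lia.
have hn1 : 1 <= n by lia.
have := @big_ge (index_iota 1 (absz n).+1) (fun i : nat => F p q r 1 i%:Z) (F p q r 1 1) (absz (t + Num.min al 1)).
rewrite gez0_abs //; apply.
rewrite mem_index_iota.
rewrite hmin; case: eqP => h.
  rewrite h addr0 in hn *. nia.
nia.
Qed.
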